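(* Let $(X_n)_{n\ge 0}$ be a time-homogeneous Markov chain on a measurable state space $\Omega$, let $S\subset\Omega$ be a measurable set, let $\tau=\min\{n\ge 0: X_n\notin S\}$, and let $\nu$ be a quasistationary distribution (QSD) of the chain in $S$. Fix integers $N\ge 1$ and $T_{\rm poll}\ge 1$. Let $(X^1_n)_{n\ge0},\dots,(X^N_n)_{n\ge0}$ be $N$ independent copies of the Markov chain (same transition kernel) whose initial positions $X^1_0,\dots,X^N_0$ are i.i.d. with law exactly $\nu$, and let $\tau^j=\min\{n\ge0: X^j_n\notin S\}$. Define $$M=\min\{m\ge 1:\ \exists\, j\in\{1,\dots,N\}\text{ with } \tau^j\le mT_{\rm poll}\},\qquad K=\min\{j\in\{1,\dots,N\}:\ \tau^j\le MT_{\rm poll}\},$$ and $$X_{\rm acc}=X^K_{\tau^K},\qquad T_{\rm acc}=(N-1)(M-1)T_{\rm poll}+(K-1)T_{\rm poll}+\tau^K .$$ (That is, the replicas are run synchronously in blocks of $T_{\rm poll}$ steps until some replica leaves $S$ during a block; $K$ is the smallest index of a replica leaving $S$ during that block.) Then $(X_{\rm acc},T_{\rm acc})$ has the same law as $(X_\tau,\tau)$, where $(X_n)_{n\ge 0}$ is the Markov chain started from $X_0\sim\nu$.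
   Context: A probability measure $\nu$ with support in $S$ is a quasistationary distribution (QSD) in $S$ if for every measurable $A\subset S$ and every $n\in\mathbb N$, $\nu(A)=\mathbb P^\nu(X_n\in A\mid \tau>n)$, where $\mathbb P^\nu$ denotes the law of the chain started from $X_0\sim\nu$ and $\tau=\min\{n\ge0: X_n\notin S\}$ is the first exit time from $S$. *)

(* Defs.v *)
From HB Require Import structures.
From mathcomp Require Import all_boot all_order all_algebra.
From mathcomp Require Import all_classical all_reals all_analysis.
Set Implicit Arguments. Unset Strict Implicit. Unset Printing Implicit Defensive.
Import Order.TTheory GRing.Theory Num.Theory.
Local Open Scope classical_set_scope.
Local Open Scope ring_scope.

Definition omin (P : pred nat) : option nat :=
  match pselect (exists n, P n) with
  | left h => Some (ex_minn h)
  | right _ => None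
  end.

(* "t <= b" for an option-valued time (None = +infinity) *)
Definition ole (t : option nat) (b : nat) : bool :=
  if t is Some s then (s <= b)%N else false.

Section Chains.
Context {d : measure_display} {Omega : measurableType d}.

Definition exit_time (S : set Omega) (x : nat -> Omega) : option nat :=
  omin (fun n => x n \notin S).

Definition exit_data (S : set Omega) (x : nat -> Omega) : option (Omega * nat) :=
  if exit_time S x is Some t then Some (x t, t) else None.

(* The parallel-replica output (X_acc, T_acc) computed from N paths xs.
   Replicas are indexed 0..N-1, so the paper's K equals k+1 here. *)
Definition par_data (N Tpoll : nat) (S : set Omega) (xs : 'I_N -> nat -> Omega)
    : option (Omega * nat) :=
  let tau j := exit_time S (xs j) in
  match omin (fun m => (0 < m)%N && [exists j : 'I_N, ole (tau j) (m * Tpoll)]) with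
  | None => None
  | Some M =>
    match omin (fun k => [exists j : 'I_N, (nat_of_ord j == k) && ole (tau j) (M * Tpoll)]) with
    | None => None
    | Some k =>
      match insub k : option 'I_N with
      | None => None
      | Some K =>
        match tau K with
        | None => None
        | Some tK => Some (xs K tK, (N - 1) * (M - 1) * Tpoll + k * Tpoll + tK)%N
        end
      end
    end
  end.

Context {R : realType} {dT : measure_display} {T : measurableType dT}.

(* X is a time-homogeneous Markov chain with transition kernel k under P
   (Markov property with respect to its natural filtration). *)
Definition markov_chain (P : probability T R) (k : R.-pker Omega ~> Omega)
    (X : nat -> T -> Omega) : Prop :=
  (forall n, measurable_fun setT (X n)) /\
  forall (n : nat) (A : nat -> set Omega) (B : set Omega),
    (forall i, measurable (A i)) -> measurable B ->
    (P ([set w | forall i, (i <= n)%N -> A i (X i w)] `&` [set w | B (X n.+1 w)]) =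
    \int[P]_(w in [set w | forall i, (i <= n)%N -> A i (X i w)]) k (X n w) B)%E.

Definition initial_law (P : probability T R) (X : nat -> T -> Omega)
    (nu : probability Omega R) : Prop :=
  forall A, measurable A -> P (X 0%N @^-1` A) = nu A.

Definition cond_prob (P : probability T R) (A B : set T) : \bar R :=
  (P (A `&` B) * (P B)^-1)%E.

Definition survives (S : set Omega) (X : nat -> T -> Omega) (n : nat) : set T :=
  [set w | ~~ ole (exit_time S (fun i => X i w)) n].

(* nu is a quasistationary distribution in S for the chain X started from nu
   (the conditioning events {tau > n} are required to have positive probability
   so that the conditional probabilities are defined). *)
Definition is_qsd (P : probability T R) (X : nat -> T -> Omega) (S : set Omega)
    (nu : probability Omega R) : Prop :=
  nu (~` S) = 0%E /\
  forall (A : set Omega) (n : nat), measurable A -> A `<=` S ->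
    (0 < P (survives S X n))%E /\
    nu A = cond_prob P (X n @^-1` A) (survives S X n).

(* the N processes Xs j are mutually independent (finite-dimensional cylinders) *)
Definition indep_processes (N : nat) (P : probability T R)
    (Xs : 'I_N -> nat -> T -> Omega) : Prop :=
  forall (n : nat) (A : 'I_N -> nat -> set Omega),
    (forall j i, measurable (A j i)) ->
    P [set w | forall j i, (i <= n)%N -> A j i (Xs j i w)] =
    (\prod_(j < N) P [set w | forall i, (i <= n)%N -> A j i (Xs j i w)])%E.

End Chains.

Arguments par_data {d Omega} N Tpoll S xs.

(* Main.v *)
Require Import Defs.
From HB Require Import structures.
From mathcomp Require Import all_boot all_order all_algebra.
From mathcomp Require Import all_classical all_reals all_analysis.
From mathcomp Require Import measurable_realfun.
From mathcomp Require Import zify.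
Set Implicit Arguments. Unset Strict Implicit. Unset Printing Implicit Defensive.
Import Order.TTheory GRing.Theory Num.Theory.
Local Open Scope classical_set_scope.
Local Open Scope ring_scope.

Section arith.
Local Open Scope nat_scope.
Definition valid (N T M kk t n : nat) : Prop :=
  [/\ (1 <= M)%N, (kk < N)%N, (t <= M * T)%N, (M = 1%N \/ ((M - 1) * T < t)%N) &
      n = ((N - 1) * (M - 1) * T + kk * T + t)%N].

Lemma ediv_uniq q s T : (s < T)%N -> (q * T + s) %/ T = q /\ (q * T + s) %% T = s.
Proof.
move=> sT; have T0 : (0 < T)%N by apply: leq_ltn_trans sT.
by rewrite divnMDl // divn_small // addn0 modnMDl modn_small.
Qed.

Lemma valid_key N T M kk t n : (0 < T)%N -> valid N T M kk t n -> (0 < t)%N ->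
  let q := (N * (M - 1) + kk)%N in let s := (t - (M - 1) * T - 1)%N in
  [/\ (n - 1 = q * T + s)%N, (s < T)%N, (kk < N)%N, (1 <= M)%N & t = ((M - 1) * T + s + 1)%N].
Proof.
move=> T0 [M1 kN tMT Mt ->] t0 q s.
have Ht : ((M - 1) * T < t)%N by case: Mt => [->|//]; rewrite subnn mul0n.
set a := ((M - 1) * T)%N in Ht *.
have MT : (M * T = a + T)%N by rewrite /a mulnBl mul1n subnK // leq_pmull.
have N1 : (N = (N - 1) + 1)%N by lia.
rewrite /q /s; split => //; try lia.
Qed.

Lemma valid_unique N T n M kk t M' kk' t' : (0 < T)%N ->
  valid N T M kk t n -> (0 < t)%N -> valid N T M' kk' t' n -> (0 < t')%N ->
  [/\ M = M', kk = kk' & t = t'].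
Proof.
move=> T0 V t0 V' t0'.
have [e1 s1 k1 m1 te] := valid_key T0 V t0.
have [e2 s2 k2 m2 te'] := valid_key T0 V' t0'.
have [d1 r1] := ediv_uniq (N * (M - 1) + kk) s1.
have [d2 r2] := ediv_uniq (N * (M' - 1) + kk') s2.
rewrite -e1 in d1 r1; rewrite -e2 in d2 r2.
have eq1 : (N * (M - 1) + kk = N * (M' - 1) + kk')%N by rewrite -d1 -d2.
have eqs : (t - (M - 1) * T - 1 = t' - (M' - 1) * T - 1)%N by rewrite -r1 -r2.
have [q1 q2] := ediv_uniq (M - 1) k1.
have [q3 q4] := ediv_uniq (M' - 1) k2.
rewrite mulnC (mulnC N (M' - 1)) in eq1.
rewrite -eq1 q1 in q3; rewrite -eq1 q2 in q4.
have eM : M = M' by lia.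
subst M'; split => //; lia.
Qed.

Lemma valid_exists N T n : (0 < N)%N -> (0 < T)%N -> (0 < n)%N ->
  exists M kk t, valid N T M kk t n /\ (0 < t)%N.
Proof.
move=> N0 T0 n0.
pose a := ((n - 1) %/ T)%N; pose b := ((n - 1) %% T)%N.
have ea : (n - 1 = a * T + b)%N by rewrite /a /b -divn_eq.
have bT : (b < T)%N by rewrite /b ltn_pmod.
pose M := (a %/ N + 1)%N; pose kk := (a %% N)%N.
have eb : (a = (a %/ N) * N + kk)%N by rewrite /kk -divn_eq.
have kN : (kk < N)%N by rewrite /kk ltn_pmod.
exists M, kk, ((M - 1) * T + b + 1)%N; split; last by lia.
have hM : (M - 1 = a %/ N)%N by rewrite /M addnK.
set c := (a %/ N)%N in hM eb.
rewrite hM; split; first by rewrite /M; lia.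
- exact: kN.
- rewrite /M -/c mulnDl mul1n; lia.
- by right; lia.
- have e3 : ((N - 1) * c * T + c * T = c * N * T)%N.
    by rewrite -mulnDl -{2}(mul1n c) -mulnDl subnK // (mulnC N c).
  rewrite eb mulnDl in ea.
  lia.
Qed.

End arith.

Lemma omin_Some (P : pred nat) m :
  omin P = Some m <-> P m /\ (forall i, (i < m)%N -> ~~ P i).
Proof.
rewrite /omin; case: pselect => [h|h].
  case: ex_minnP => m0 Pm0 min0; split.
    case=> <-; split => // i im; apply/negP => Pi.
    by move: (min0 _ Pi); rewrite leqNgt im.
  move=> [Pm minm]; congr Some; apply/eqP; rewrite eqn_leq min0 //=.
  by rewrite leqNgt; apply/negP => /minm; rewrite Pm0.
split => // -[Pm _]; exfalso; apply: h; by exists m.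
Qed.

Lemma omin_None (P : pred nat) :
  omin P = None <-> forall n, ~~ P n.
Proof.
rewrite /omin; case: pselect => [h|h]; split => //.
  by case: h => n Pn /(_ n); rewrite Pn.
by move=> _ n; apply/negP => Pn; apply: h; exists n.
Qed.

Section exit.
Context {d : measure_display} {Omega : measurableType d}.
Variables (S : set Omega).

Lemma exit_Some (x : nat -> Omega) t :
  exit_time S x = Some t <-> ~ S (x t) /\ (forall i, (i < t)%N -> S (x i)).
Proof.
rewrite /exit_time omin_Some; split.
  move=> [/negP Ht H]; split; first by move=> St; apply: Ht; rewrite in_setE.
  by move=> i /H; rewrite negbK in_setE.
move=> [Ht H]; split; first by apply/negP; rewrite in_setE.
by move=> i /H Si; rewrite negbK in_setE.
Qed.

Lemma ole_exit (x : nat -> Omega) b :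
  ole (exit_time S x) b <-> exists i, (i <= b)%N /\ ~ S (x i).
Proof.
split.
  case E: (exit_time S x) => [t|] //= tb.
  by move: E => /exit_Some [Ht _]; exists t.
move=> [i [ib Si]].
have: exists n, (fun n => x n \notin S) n.
  by exists i; apply/negP; rewrite in_setE.
case E: (exit_time S x) => [t|] /=.
  move: E => /exit_Some [Ht H] _.
  rewrite (leq_trans _ ib) //; rewrite leqNgt; apply/negP => /H.
  exact: Si.
by move: E; rewrite /exit_time omin_None => H [n]; rewrite (negbTE (H n)).
Qed.

Lemma nole_exit (x : nat -> Omega) b :
  ~~ ole (exit_time S x) b <-> forall i, (i <= b)%N -> S (x i).
Proof.
split.
  move=> /negP H i ib; apply: contrapT => Si; apply: H; apply/ole_exit.
  by exists i.
move=> H; apply/negP => /ole_exit [i [ib Si]]; exact: Si (H _ ib).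
Qed.
End exit.

Section charac.
Context {d : measure_display} {Omega : measurableType d}.
Variables (N T : nat) (S A : set Omega).

Definition Aset (M kk t : nat) (j : 'I_N) (i : nat) : set Omega :=
  if (j < kk)%N then S
  else if (nat_of_ord j == kk) then
    (if (i < t)%N then S else if i == t then A `&` ~` S else setT)
  else (if (1 < M)%N && (i <= (M - 1) * T)%N then S else setT).

Definition cylP (xs : 'I_N -> nat -> Omega) M kk t :=
  forall j i, (i <= M * T)%N -> Aset M kk t j i (xs j i).

Lemma charac (xs : 'I_N -> nat -> Omega) n :
  (exists y, par_data N T S xs = Some (y, n) /\ A y) <->
  exists M kk t, valid N T M kk t n /\ cylP xs M kk t.
Proof.
split.
  move=> [y []]; rewrite /par_data.
  case EM: omin => [M|] //; case EK: omin => [kk|] //.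
  case: insubP => [K kN vK|] //.
  case Et: exit_time => [tK|] //= [<- <-] Ay.
  move: EM => /omin_Some [/andP [M0 _] Mmin].
  move: EK => /omin_Some [/existsP [j /andP [/eqP jk oj]] kmin].
  have jK : j = K by apply: val_inj; rewrite /= jk vK.
  move: oj; rewrite jK Et /= => tKM.
  move: Et => /exit_Some [ntK ltK].
  have Mgt : (1 < M)%N -> forall j' i, (i <= (M - 1) * T)%N -> S (xs j' i).
    move=> M1 j' i iM.
    have h1 : (M - 1 < M)%N by lia.
    have h2 : (0 < M - 1)%N by lia.
    have := Mmin (M - 1)%N h1; rewrite h2 /= => /existsPn /(_ j') /nole_exit.
    by apply.
  exists M, kk, tK; split.
    split => //.
    have [M1|M1] := leqP M 1%N; first by left; lia.
    right; rewrite ltnNge; apply/negP => tle; apply: ntK; exact: Mgt.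
  move=> j' i iMT; rewrite /Aset.
  case: ifPn => [j'k|]; first last.
    rewrite -leqNgt => kj'.
    case: ifPn => [/eqP j'k|nj'k].
      have j'K : j' = K by apply: val_inj; rewrite /= j'k vK.
      rewrite j'K; case: ifPn => [/ltK //|_]; case: ifPn => [/eqP -> //|//].
    by case: ifPn => // /andP [M1 iM]; apply: Mgt.
  have := kmin _ j'k => /existsPn /(_ j'); rewrite eqxx /= => /nole_exit.
  by apply.
move=> [M [kk [t [[M0 kN tMT Mt ->] cy]]]].
set K := Ordinal kN.
have f1 : forall j : 'I_N, (j < kk)%N -> forall i, (i <= M * T)%N -> S (xs j i).
  by move=> j jk i iM; have := cy j i iM; rewrite /Aset jk.
have fK : forall i, (i <= M * T)%N -> Aset M kk t K i (xs K i) by move=> i; apply: cy.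
have fK1 : forall i, (i < t)%N -> S (xs K i).
  move=> i it; have := fK i (leq_trans (ltnW it) tMT).
  by rewrite /Aset /= ltnn eqxx it.
have [AK nSK] : A (xs K t) /\ ~ S (xs K t).
  by have := fK t tMT; rewrite /Aset /= ltnn eqxx ltnn eqxx => -[].
have f3 : (1 < M)%N -> forall j i, (i <= (M - 1) * T)%N -> S (xs j i).
  move=> M1 j i iM.
  have iMT : (i <= M * T)%N.
    by rewrite (leq_trans iM) // leq_mul2r leq_subr orbT.
  have [jk|] := ltnP j kk; first exact: f1.
  rewrite leq_eqVlt => /orP [/eqP kj|kj].
    have jK : j = K by apply: val_inj; rewrite /= kj.
    rewrite jK; apply: fK1; case: Mt => [M1'|Mt']; [by rewrite M1' in M1 | exact: leq_ltn_trans iM Mt'].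
  by have := cy j i iMT; rewrite /Aset ltnNge (ltnW kj) /= gtn_eqF // M1 iM.
have EtK : exit_time S (xs K) = Some t by apply/exit_Some.
exists (xs K t); split => //; rewrite /par_data.
have -> : omin (fun m => (0 < m)%N &&
     [exists j : 'I_N, ole (exit_time S (xs j)) (m * T)]) = Some M.
  apply/omin_Some; split.
    by rewrite M0 /=; apply/existsP; exists K; rewrite EtK /=.
  move=> m mM; apply/negP => /andP [m0 /existsP [j /ole_exit [i [imT nS]]]].
  apply: nS; apply: (f3 (leq_ltn_trans m0 mM)).
  rewrite (leq_trans imT) // leq_mul2r; apply/orP; right; lia.
have -> : omin (fun k0 => [exists j : 'I_N, (nat_of_ord j == k0) &&
     ole (exit_time S (xs j)) (M * T)]) = Some kk.
  apply/omin_Some; split.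
    by apply/existsP; exists K; rewrite eqxx EtK /=.
  move=> i ik; apply/existsPn => j; apply/negP => /andP [/eqP ji /ole_exit [i' [i'M nS]]].
  by apply: nS; apply: f1 => //; rewrite ji.
case: insubP => [K' _ vK'|]; last by rewrite kN.
have -> : K' = K by apply: val_inj.
by rewrite EtK.
Qed.
End charac.

Section restr.
Local Open Scope ereal_scope.
Context d (T : measurableType d) (R : realType) (m : measure T R).
Lemma int_restr (D : set T) (mD : measurable D) (f : T -> \bar R) :
  measurable_fun setT f -> (forall x, 0 <= f x) ->
  \int[m]_(x in D) f x = \int[mrestr m mD]_(x in setT) f x.
Proof.
move=> mf f0.
have mCD : measurable (~` D) by apply: measurableC.
rewrite (@ge0_negligible_integral _ _ _ (mrestr m mD) setT (~` D)) //; last first.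
  transitivity (m set0); last exact: measure0.
  by rewrite -(setICl D).
rewrite setTD setCK; apply: eq_measure_integral => A mA AD.
by rewrite -[in LHS](setIidl AD).
Qed.
End restr.

Section chain.
Local Open Scope ereal_scope.
Context (R : realType) (d : measure_display) (Omega : measurableType d)
  (k : R.-pker Omega ~> Omega) (S : set Omega) (mS : measurable S)
  (nu : probability Omega R) (dT : measure_display) (T : measurableType dT)
  (Q : probability T R) (Y : nat -> T -> Omega).
Hypothesis HM : markov_chain Q k Y.
Hypothesis HI : initial_law Q Y nu.

Definition cyl n := [set w | forall i, (i <= n)%N -> S (Y i w)].

Lemma mYp n B : measurable B -> measurable (Y n @^-1` B).
Proof. by move=> mB; rewrite -(setTI (_ @^-1` _)); apply: (HM.1 n). Qed.

Lemma mcyl n : measurable (cyl n).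
Proof.
have -> : cyl n = \bigcap_(i in [set i | (i <= n)%N]) (Y i @^-1` S).
  by apply/seteqP; split => w /= H i /H.
by apply: bigcap_measurableType => i _; apply: mYp.
Qed.

Lemma mkB B : measurable B -> measurable_fun setT (fun x => k x B).
Proof. by move=> mB; apply: measurable_kernel. Qed.

Lemma L0 B : measurable B -> Q (cyl 0 `&` Y 0 @^-1` B) = nu (B `&` S).
Proof.
move=> mB; rewrite -HI; last exact: measurableI.
congr (Q _); apply/seteqP; split => w /=.
  by move=> [H Bw]; split => //; apply: H.
by move=> [Bw Sw]; split => // i; rewrite leqn0 => /eqP ->.
Qed.

Variables (lr : R) (lr0 : (0 <= lr)%R).

Lemma transfer n :
  (forall B, measurable B -> Q (cyl n `&` Y n @^-1` B) = (lr ^+ n)%:E * nu (B `&` S)) ->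
  forall g, measurable_fun setT g -> (forall x, 0 <= g x) ->
  \int[Q]_(w in cyl n) g (Y n w) = (lr ^+ n)%:E * \int[nu]_(x in S) g x.
Proof.
move=> HL g mg g0.
have mgY : measurable_fun setT (fun w => g (Y n w)).
  by apply: measurableT_comp => //; exact: (HM.1 n).
rewrite (int_restr _ (mcyl n)) //.
transitivity (\int[pushforward (mrestr Q (mcyl n)) (Y n)]_(y in setT) g y).
  by rewrite ge0_integral_pushforward //; exact: (HM.1 n).
have r0 : (0 <= lr ^+ n)%R by apply: exprn_ge0.
rewrite (eq_measure_integral (mscale (NngNum r0) (mrestr nu mS))); last 2 first.
- exact: (HM.1 n).
- move=> mf A mA _.
  rewrite /mscale /= /pushforward /mrestr /= setIC HL //.
rewrite ge0_integral_mscale //= -int_restr //.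
Qed.

Hypothesis HIv : forall B, measurable B ->
  \int[nu]_(x in S) k x (B `&` S) = lr%:E * nu (B `&` S).

Lemma step_set n B : measurable B ->
  Q (cyl n `&` Y n.+1 @^-1` B) = \int[Q]_(w in cyl n) k (Y n w) B.
Proof. by move=> mB; rewrite (HM.2 n (fun _ => S) B) //. Qed.

Lemma L1 n B : measurable B -> Q (cyl n `&` Y n @^-1` B) = (lr ^+ n)%:E * nu (B `&` S).
Proof.
elim: n B => [|n IH] B mB.
  by rewrite L0 // expr0 mul1e.
have -> : cyl n.+1 `&` Y n.+1 @^-1` B = cyl n `&` Y n.+1 @^-1` (B `&` S).
  apply/seteqP; split => w /=.
    by move=> [H Bw]; split; [move=> i i_n; apply: H; rewrite (leq_trans i_n) | split => //; apply: H].
  move=> [H [Bw Sw]]; split => // i; rewrite leq_eqVlt => /orP [/eqP -> //|].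
  by rewrite ltnS => /H.
rewrite step_set; last exact: measurableI.
have mBS : measurable (B `&` S) by exact: measurableI.
rewrite (transfer IH (g := fun x => k x (B `&` S))); last 2 first.
- exact: mkB.
- by move=> x; apply: measure_ge0.
by rewrite HIv // exprS EFinM muleA [X in X * _]muleC.
Qed.

Hypothesis nuS : nu (~` S) = 0.

Lemma nuS1 : nu S = 1.
Proof.
rewrite -[LHS]adde0 -nuS -measureU ?setUCr //.
- exact: probability_setT.
- exact: measurableC.
- by rewrite setICr.
Qed.

Lemma Lsurv a : Q (cyl a) = (lr ^+ a)%:E.
Proof.
have := L1 a measurableT; rewrite preimage_setT setIT setTI nuS1 mule1 => <- //.
Qed.

Lemma Lexit t B : measurable B ->
  Q (cyl t `&` Y t.+1 @^-1` B) = (lr ^+ t)%:E * \int[nu]_(x in S) k x B.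
Proof.
move=> mB; rewrite step_set // (transfer (fun B => L1 t (B:=B)) (g := fun x => k x B)) //.
- exact: mkB.
Qed.
End chain.

Lemma null_split d (T : measurableType d) (R : realType) (mu : measure T R) (E G : set T) :
  measurable E -> measurable G -> mu (~` G) = 0%E -> mu E = mu (E `&` G).
Proof.
move=> mE mG G0.
have mCG := measurableC mG.
rewrite -{1}(setIT E) -(setUCr G) setIUr measureU //; last 3 first.
- exact: measurableI.
- exact: measurableI.
- by rewrite setIACA setICr setI0.
rewrite (@subset_measure0 _ _ _ mu (E `&` ~` G) (~` G)) ?adde0 //.
exact: measurableI.
Qed.

Lemma sum3 N kk (x y z : nat) : (kk < N)%N ->
  (\sum_(j < N) (if (j < kk)%N then x else if nat_of_ord j == kk then y else z) =
   kk * x + y + (N - 1 - kk) * z)%N.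
Proof.
move=> kN.
rewrite -(big_mkord xpredT (fun j => if (j < kk)%N then x else if j == kk then y else z)).
rewrite (big_cat_nat _ (n := kk)) //=; last exact: ltnW.
rewrite [X in (_ + X)%N]big_ltn //= ltnn eqxx.
rewrite (eq_big_nat _ _ (F2 := fun _ => x)); last by move=> i /andP [_ ->].
rewrite [X in (_ + (_ + X))%N](eq_big_nat _ _ (F2 := fun _ => z)); last first.
  by move=> i /andP [ki _]; rewrite ltnNge (ltnW ki) /= gtn_eqF.
rewrite !sum_nat_const_nat; lia.
Qed.

Lemma mcylN d (Omega : measurableType d) dT (T : measurableType dT) (N H : nat)
  (Xs : 'I_N -> nat -> T -> Omega) (B : 'I_N -> nat -> set Omega) :
  (forall j i, measurable_fun setT (Xs j i)) -> (forall j i, measurable (B j i)) ->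
  measurable [set w | forall j i, (i <= H)%N -> B j i (Xs j i w)].
Proof.
move=> mX mB.
have -> : [set w | forall j i, (i <= H)%N -> B j i (Xs j i w)] =
  \bigcap_(i in [set i | (i <= H)%N]) \bigcap_(j in [set: 'I_N]) (Xs j i @^-1` B j i).
  by apply/seteqP; split => w /=; [move=> Hw i iH j _; exact: Hw | move=> Hw j i iH; exact: Hw].
apply: bigcap_measurableType => i _; apply: fin_bigcap_measurable; first exact: finite_finset.
by move=> j _; rewrite -(setTI (_ @^-1` _)); apply: mX.
Qed.

Lemma surv_cyl d (Omega : measurableType d) dT (T : measurableType dT) (S : set Omega)
  (Z : nat -> T -> Omega) m : survives S Z m = cyl S Z m.
Proof.
apply/seteqP; split => w /=; first by move/nole_exit.
by move=> H; apply/nole_exit.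
Qed.

Lemma exit_data_iff d (Omega : measurableType d) (S A : set Omega) (x : nat -> Omega) n :
  (exists y, exit_data S x = Some (y, n) /\ A y) <->
  (~ S (x n) /\ (forall i, (i < n)%N -> S (x i))) /\ A (x n).
Proof.
rewrite /exit_data; split.
  case E: exit_time => [t|]; last by case=> y [].
  case=> y [] [] <- <- Ay; split => //; exact/exit_Some.
by move=> [/exit_Some E Ay]; exists (x n); rewrite E.
Qed.

Theorem proposition1
  (R : realType) (d : measure_display) (Omega : measurableType d)
  (k : R.-pker Omega ~> Omega) (S : set Omega) (nu : probability Omega R)
  (d0 : measure_display) (T0 : measurableType d0) (P0 : probability T0 R)
  (X : nat -> T0 -> Omega)
  (dT : measure_display) (T : measurableType dT) (P : probability T R)
  (N Tpoll : nat) (Xs : 'I_N -> nat -> T -> Omega) :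
  measurable S ->
  markov_chain P0 k X -> initial_law P0 X nu -> is_qsd P0 X S nu ->
  (1 <= N)%N -> (1 <= Tpoll)%N ->
  (forall j, markov_chain P k (Xs j)) ->
  (forall j, initial_law P (Xs j) nu) ->
  indep_processes P Xs ->
  forall (A : set Omega) (n : nat), measurable A ->
    P [set w | exists y, par_data N Tpoll S (fun j i => Xs j i w) = Some (y, n) /\ A y] =
    P0 [set w | exists y, exit_data S (fun i => X i w) = Some (y, n) /\ A y].
Proof.
move=> mS HM0 HI0 [nuS HQ] N1 T1 HMs HIs Hind A n mA.
have mc1 : measurable (cyl S X 1) := mcyl mS HM0 1.
have lam_fin : P0 (cyl S X 1) \is a fin_num by apply: fin_num_measure.
set lr := fine (P0 (cyl S X 1)).
have elam : P0 (cyl S X 1) = lr%:E by rewrite /lr fineK.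
have lr0 : (0 <= lr)%R by rewrite -lee_fin -elam measure_ge0.
have HL0 : forall B, measurable B ->
    P0 (cyl S X 0 `&` X 0 @^-1` B) = ((lr ^+ 0)%:E * nu (B `&` S))%E.
  by move=> B mB; rewrite (L0 mS HI0 mB) expr0 mul1e.
have HIv : forall B, measurable B ->
    (\int[nu]_(x in S) k x (B `&` S) = lr%:E * nu (B `&` S))%E.
  move=> B mB.
  have mBS : measurable (B `&` S) := measurableI _ _ mB mS.
  have [pos eqn] := HQ (B `&` S) 1%N mBS (@subIsetr _ B S).
  rewrite surv_cyl elam in pos.
  rewrite /cond_prob surv_cyl elam in eqn.
  have e1 : X 1%N @^-1` (B `&` S) `&` cyl S X 1 = cyl S X 0 `&` X 1%N @^-1` (B `&` S).
    apply/seteqP; split => w /=.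
      by move=> [BS H]; split => // i; rewrite leqn0 => /eqP ->; apply: H.
    move=> [H BS]; split => // i; rewrite leq_eqVlt => /orP [/eqP -> | ]; first by case: BS.
    by rewrite ltnS; apply: H.
  rewrite e1 (step_set mS HM0 0 mBS) in eqn.
  rewrite (transfer mS HM0 lr0 HL0 (g := fun x => k x (B `&` S))) in eqn; last 2 first.
  - exact: mkB.
  - by move=> x; apply: measure_ge0.
  have lrn0 : lr != 0%R by rewrite gt_eqF // -lte_fin.
  rewrite eqn expr0 mul1e inver (negbTE lrn0) muleCA -EFinM mulfV // mule1 //.
have mAC : measurable (A `&` ~` S) by apply: measurableI => //; exact: measurableC.
set c := (\int[nu]_(x in S) k x (A `&` ~` S))%E.
have RHS : P0 [set w | exists y, exit_data S (fun i => X i w) = Some (y, n) /\ A y] =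
    (if n is t.+1 then (lr ^+ t)%:E * c else 0)%E.
  case: n => [|t].
    have -> : [set w | exists y, exit_data S (fun i => X i w) = Some (y, 0%N) /\ A y] =
        X 0%N @^-1` (A `&` ~` S).
      apply/seteqP; split => w /=.
        by move/exit_data_iff => [[nS _] Aw].
      by move=> [Aw nS]; apply/exit_data_iff.
    rewrite HI0 //; apply: (@subset_measure0 _ _ _ nu (A `&` ~` S) (~` S)) => //;
      try exact: measurableC; try exact: subIsetr.
  have -> : [set w | exists y, exit_data S (fun i => X i w) = Some (y, t.+1) /\ A y] =
      cyl S X t `&` X t.+1 @^-1` (A `&` ~` S).
    apply/seteqP; split => w /=.
      move/exit_data_iff => [[nS H] Aw]; split => //.
    by move=> [H [Aw nS]]; apply/exit_data_iff; split => //; split => //.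
  exact: (Lexit mS HM0 HI0 lr0 HIv t mAC).
rewrite RHS.
set E := [set w | exists y, par_data N Tpoll S (fun j i => Xs j i w) = Some (y, n) /\ A y].
have EE : E = [set w | exists M kk t, valid N Tpoll M kk t n /\
    cylP Tpoll S A (fun j i => Xs j i w) M kk t].
  by apply/seteqP; split => w /charac.
have mXs : forall j i, measurable_fun setT (Xs j i) := fun j i => (HMs j).1 i.
have mAset : forall M kk t (j : 'I_N) i, measurable (Aset Tpoll S A M kk t j i).
  by move=> M kk t j i; rewrite /Aset; repeat case: ifPn => _ //.
have mcylP : forall M kk t,
    measurable [set w | cylP Tpoll S A (fun j i => Xs j i w) M kk t].
  by move=> M kk t; apply: (mcylN (M * Tpoll) mXs (mAset M kk t)).
have mE : measurable E.
  rewrite EE.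
  have -> : [set w | exists M kk t, valid N Tpoll M kk t n /\
      cylP Tpoll S A (fun j i => Xs j i w) M kk t] =
    \bigcup_(M in [set: nat]) \bigcup_(kk in [set: nat])
      \bigcup_(t in [set t | valid N Tpoll M kk t n])
        [set w | cylP Tpoll S A (fun j i => Xs j i w) M kk t].
    apply/seteqP; split => w /=.
      by move=> [M [kk [t [V cy]]]]; exists M => //; exists kk => //; exists t.
    by move=> [M _ [kk _ [t V cy]]]; exists M, kk, t.
  apply: bigcup_measurable => M _; apply: bigcup_measurable => kk _.
  by apply: bigcup_measurable => t _.
set G := [set w | forall j : 'I_N, S (Xs j 0%N w)].
have eG : G = [set w | forall j i, (i <= 0)%N -> (fun _ _ => S) j i (Xs j i w)].
  apply/seteqP; split => w /=; last by move=> H j; apply: H.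
  by move=> H j i; rewrite leqn0 => /eqP ->.
have mG : measurable G by rewrite eG; exact: (mcylN 0 mXs (fun _ _ => mS)).
have Lsj := fun j => Lsurv mS (HMs j) (HIs j) lr0 HIv nuS.
have PG : P G = 1%E.
  rewrite eG (Hind 0%N (fun _ _ => S)) //.
  rewrite big1 // => j _; have := Lsj j 0%N; rewrite expr0 => <- //.
have PCG : P (~` G) = 0%E by rewrite probability_setC // PG subee.
rewrite (null_split mE mG PCG).
have Et : forall w, G w -> E w -> exists M kk t,
    [/\ valid N Tpoll M kk t n, (0 < t)%N & cylP Tpoll S A (fun j i => Xs j i w) M kk t].
  move=> w Gw; rewrite EE => -[M [kk [t [V cy]]]]; exists M, kk, t; split => //.
  case: V => _ kN _ _ _.
  rewrite lt0n; apply/negP => /eqP t0; subst t.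
  have := cy (Ordinal kN) 0%N (leq0n _); rewrite /Aset /= ltnn eqxx => -[_ nS].
  exact: nS (Gw _).
have [n0|npos] := posnP n.
  rewrite n0 /= (_ : E `&` G = set0) ?measure0 //.
  apply/seteqP; split => // w [Ew Gw].
  have [M [kk [t [V t0 _]]]] := Et w Gw Ew.
  case: V => _ _ _ _ en; have : (t <= n)%N by rewrite en leq_addl.
  by rewrite n0 leqNgt t0.
have [M [kk [t [V t0]]]] := valid_exists N1 T1 npos.
rewrite -(prednK npos) /=.
have EG : E `&` G = [set w | cylP Tpoll S A (fun j i => Xs j i w) M kk t] `&` G.
  apply/seteqP; split => w [Ew Gw]; split => //.
    have [M' [kk' [t' [V' t0' cy']]]] := Et w Gw Ew.
    have [eM ek et] := valid_unique T1 V t0 V' t0'.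
    by subst M' kk' t'.
  by rewrite EE; exists M, kk, t; split.
rewrite EG -(null_split (mcylP M kk t) mG PCG).
case: (V) => M0 kN tMT Mt en.
rewrite (_ : [set w | cylP Tpoll S A (fun j i => Xs j i w) M kk t] =
  [set w | forall (j : 'I_N) i, (i <= M * Tpoll)%N -> Aset Tpoll S A M kk t j i (Xs j i w)]) //.
apply: (eq_trans (Hind (M * Tpoll)%N (Aset Tpoll S A M kk t) (mAset M kk t))).
set e := fun j : 'I_N => if (j < kk)%N then (M * Tpoll)%N
  else if nat_of_ord j == kk then t.-1 else ((M - 1) * Tpoll)%N.
rewrite (eq_bigr (fun j : 'I_N => ((lr ^+ e j)%:E * (if nat_of_ord j == kk then c else 1))%E));
  last first.
  move=> j _; rewrite /e.
  have Lj := Lsj j.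
  have [jk|kj] := ltnP j kk.
    rewrite (ltn_eqF jk) mule1 -(Lj (M * Tpoll)%N); congr (P _).
    by apply/seteqP; split => w /=; rewrite /Aset jk.
  have [ejk|njk] := eqVneq (nat_of_ord j) kk.
    rewrite -(Lexit mS (HMs j) (HIs j) lr0 HIv t.-1 mAC) prednK //.
    congr (P _); apply/seteqP; split => w /=.
      move=> H; split.
        move=> i it1; have it : (i < t)%N by lia.
        by have := H i (leq_trans (ltnW it) tMT); rewrite /Aset ltnNge kj ejk eqxx it.
      by have := H t tMT; rewrite /Aset ltnNge kj ejk eqxx ltnn eqxx.
    move=> [H1 H2] i iMT; rewrite /Aset ltnNge kj ejk eqxx.
    have [it|ti] := ltnP i t; first by apply: H1; lia.
    by have [->|//] := eqVneq i t.
  rewrite mule1.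
  have [M1|M1] := leqP M 1%N.
    have -> : (M - 1 = 0)%N by lia.
    rewrite mul0n expr0 -(@probability_setT _ _ _ P); congr (P _).
    apply/seteqP; split => w //= _ i _.
    by rewrite /Aset ltnNge kj (negbTE njk) ltnNge M1.
  rewrite -(Lj ((M - 1) * Tpoll)%N); congr (P _).
  apply/seteqP; split => w /=.
    move=> H i iM; have := H i (leq_trans iM (leq_mul (leq_subr 1 M) (leqnn Tpoll))).
    by rewrite /Aset ltnNge kj (negbTE njk) M1 iM.
  move=> H i _; rewrite /Aset ltnNge kj (negbTE njk) M1 /=.
  by case: ifP => // iM; apply: H.
rewrite big_split /= prodEFin prodrXr.
rewrite [X in (_ * X)%E](bigD1 (Ordinal kN)) //= eqxx.
rewrite [X in (c * X)%E]big1 ?mule1; last first.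
  move=> j jk; rewrite ifF //; apply/negP => /eqP ejk; move: jk.
  by rewrite -val_eqE /= ejk eqxx.
congr ((_ ^+ _)%:E * _)%E.
rewrite /e (sum3 _ _ _ kN).
have MT : (M * Tpoll = (M - 1) * Tpoll + Tpoll)%N by rewrite -{1}(subnK M0) mulnDl mul1n.
have NN : (N - 1 = kk + (N - 1 - kk))%N by lia.
rewrite MT; rewrite -mulnA NN mulnDl in en.
set a := ((M - 1) * Tpoll)%N in en *.
rewrite en mulnDr; lia.
Qed.
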